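(* Let $A$ be an integral quantum B-algebra, let $X,F\in U(A)$, let $F$ be a filter of $A$, and assume $1\in X\cap F$. Write $W=\mu_F(X)$. Then: (1) $W\cdot\mu_F(W\leadsto X)=W=\mu_F(W\to X)\cdot W$; (2) $\mu_F(W\to X)\to(W\to X)=W\to X$; (3) $\mu_F(W\leadsto X)\leadsto(W\leadsto X)=W\leadsto X$; (4) $(W\to X)\cdot\mu_F(W\to X)=W\to X$; (5) $\mu_F(W\leadsto X)\cdot(W\leadsto X)=W\leadsto X$; (6) $\mu_F(W\to X)=\mu_F(W\to X)\cdot\mu_F(W\to X)$, and $\mu_F(W\to X)$ is a filter of $A$ whenever $1\in\mu_F(W\to X)$; (7) $\mu_F(W\leadsto X)=\mu_F(W\leadsto X)\cdot\mu_F(W\leadsto X)$, and $\mu_F(W\leadsto X)$ is a filter of $A$ whenever $1\in\mu_F(W\leadsto X)$.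
   Context: A quantum B-algebra is a poset $(A,\le)$ with binary operations $\to,\leadsto$ such that for all $x,y,z\in A$: $y\to z\le(x\to y)\to(x\to z)$; $y\leadsto z\le(x\leadsto y)\leadsto(x\leadsto z)$; $y\le z$ implies $x\to y\le x\to z$; and $x\le y\to z$ iff $y\le x\leadsto z$. It is integral if it has a greatest element $1$ with $1\to x=1\leadsto x=x$ for all $x$. $U(A)$ denotes the set of all upper subsets of $A$ (including $\emptyset$), a quantale under inclusion with multiplication $X\cdot Y=\{a\in A\mid\exists y\in Y:\ y\to a\in X\}$. Its residuals are: for $Y,Z\in U(A)$, $Y\to Z$ is the largest $V\in U(A)$ with $V\cdot Y\subseteq Z$, and for $X,Z\in U(A)$, $X\leadsto Z$ is the largest $V\in U(A)$ with $X\cdot V\subseteq Z$. A filter of $A$ is a nonempty $F\in U(A)$ with $F\cdot F\subseteq F$. For $F,X\in U(A)$, $\mu_F(X)=F\cap X$. *)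

(* Defs.v *)
Set Implicit Arguments.

Section QBA.
Variable A : Type.
Variable le : A -> A -> Prop.
Variables imp limp : A -> A -> A.
Variable one : A.

Definition is_poset : Prop :=
  (forall x, le x x) /\
  (forall x y, le x y -> le y x -> x = y) /\
  (forall x y z, le x y -> le y z -> le x z).

Definition is_quantum_B_algebra : Prop :=
  is_poset /\
  (forall x y z, le (imp y z) (imp (imp x y) (imp x z))) /\
  (forall x y z, le (limp y z) (limp (limp x y) (limp x z))) /\
  (forall x y z, le y z -> le (imp x y) (imp x z)) /\
  (forall x y z, le x (imp y z) <-> le y (limp x z)).

Definition is_integral_quantum_B_algebra : Prop :=
  is_quantum_B_algebra /\
  (forall x, le x one) /\
  (forall x, imp one x = x /\ limp one x = x).

(* upper subsets (elements of U(A), including the empty set) *)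
Definition upper (X : A -> Prop) : Prop :=
  forall x y, X x -> le x y -> X y.

Definition subset (X Y : A -> Prop) : Prop := forall a, X a -> Y a.

Definition Umul (X Y : A -> Prop) : A -> Prop :=
  fun a => exists y, Y y /\ X (imp y a).

(* residuals of U(A): Y -> Z is the largest upper V with V . Y <= Z,
   realised as the union of all such V *)
Definition Uimp (Y Z : A -> Prop) : A -> Prop :=
  fun a => exists V, upper V /\ subset (Umul V Y) Z /\ V a.

(* X ~> Z is the largest upper V with X . V <= Z *)
Definition Ulimp (X Z : A -> Prop) : A -> Prop :=
  fun a => exists V, upper V /\ subset (Umul X V) Z /\ V a.

Definition is_filter (F : A -> Prop) : Prop :=
  (exists a, F a) /\ upper F /\ subset (Umul F F) F.

Definition mu (F X : A -> Prop) : A -> Prop := fun a => F a /\ X a.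

End QBA.

(* Main.v *)
Require Import Defs.
From Stdlib Require Import FunctionalExtensionality PropExtensionality.

Lemma pext {A : Type} (P Q : A -> Prop) : (forall a, P a <-> Q a) -> P = Q.
Proof.
  intro H; apply functional_extensionality; intro a; apply propositional_extensionality; auto.
Qed.

Section S.
Context {A : Type} {le : A -> A -> Prop} {imp limp : A -> A -> A} {one : A}
  (HA : is_integral_quantum_B_algebra le imp limp one).

Lemma refl' x : le x x. Proof. destruct HA as [[[h _] _] _]; auto. Qed.
Lemma anti' x y : le x y -> le y x -> x = y. Proof. destruct HA as [[[_ [h _]] _] _]; auto. Qed.
Lemma trans' x y z : le x y -> le y z -> le x z. Proof. destruct HA as [[[_ [_ h]] _] _]; eauto. Qed.
Lemma ax1 x y z : le (imp y z) (imp (imp x y) (imp x z)). Proof. destruct HA as [[_ [h _]] _]; auto. Qed.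
Lemma ax2 x y z : le (limp y z) (limp (limp x y) (limp x z)). Proof. destruct HA as [[_ [_ [h _]]] _]; auto. Qed.
Lemma mono' x y z : le y z -> le (imp x y) (imp x z). Proof. destruct HA as [[_ [_ [_ [h _]]]] _]; auto. Qed.
Lemma res' x y z : le x (imp y z) <-> le y (limp x z). Proof. destruct HA as [[_ [_ [_ [_ h]]]] _]; auto. Qed.
Lemma top' x : le x one. Proof. destruct HA as [_ [h _]]; auto. Qed.
Lemma oneimp x : imp one x = x. Proof. destruct HA as [_ [_ h]]; apply h. Qed.
Lemma onelimp x : limp one x = x. Proof. destruct HA as [_ [_ h]]; apply h. Qed.

Lemma le_imp_one y a : le y a -> imp y a = one.
Proof.
  intro H. apply anti'. apply top'. apply res'. rewrite onelimp; auto.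
Qed.

Lemma one_le y a : le one (imp y a) -> le y a.
Proof. intro H. apply res' in H. rewrite onelimp in H; auto. Qed.

Lemma mul_upper X Y : upper le X -> upper le (Umul imp X Y).
Proof.
  intros HX a b [y [Hy Hx]] Hab. exists y; split; auto. eapply HX; eauto. apply mono'; auto.
Qed.

Lemma mul_one_r X V a : V one -> X a -> Umul imp X V a.
Proof. intros. exists one; rewrite oneimp; auto. Qed.

Lemma mul_one_l V Y a : V one -> Y a -> Umul imp V Y a.
Proof. intros. exists a; rewrite le_imp_one; auto. apply refl'. Qed.

Lemma mul_mono X X' Y Y' : subset X X' -> subset Y Y' ->
  subset (Umul imp X Y) (Umul imp X' Y').
Proof. intros h1 h2 a [y [Hy Hx]]; exists y; auto. Qed.

Lemma assoc_easy X Y Z : upper le X ->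
  subset (Umul imp X (Umul imp Y Z)) (Umul imp (Umul imp X Y) Z).
Proof.
  intros HX a [w [[z [Hz Hy]] Hx]]. exists z; split; auto.
  exists (imp z w); split; auto. eapply HX; eauto. apply ax1.
Qed.

Lemma assoc_hard X Y Z : upper le X -> upper le Y ->
  subset (Umul imp (Umul imp X Y) Z) (Umul imp X (Umul imp Y Z)).
Proof.
  intros HX HY a [z [Hz [y [Hy Hx]]]].
  set (x := imp y (imp z a)) in *.
  exists (limp x a); split.
  - exists z; split; auto. eapply HY; [exact Hy|].
    eapply trans' with (y := limp x (imp z a)).
    + apply res'. apply refl'.
    + apply res'. eapply trans'; [| apply ax2].
      apply res'. apply refl'.
  - eapply HX; [exact Hx|]. apply res'. apply refl'.
Qed.

Lemma uimp_upper Y Z : upper le (Uimp le imp Y Z).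
Proof. intros a b [V [HV [HS Ha]]] Hab. exists V; repeat split; eauto. Qed.
Lemma ulimp_upper Y Z : upper le (Ulimp le imp Y Z).
Proof. intros a b [V [HV [HS Ha]]] Hab. exists V; repeat split; eauto. Qed.
Lemma uimp_le Y Z : subset (Umul imp (Uimp le imp Y Z) Y) Z.
Proof. intros a [y [Hy [V [HV [HS Hv]]]]]. apply HS. exists y; auto. Qed.
Lemma ulimp_le Y Z : subset (Umul imp Y (Ulimp le imp Y Z)) Z.
Proof. intros a [y [[V [HV [HS Hv]]] Hy]]. apply HS. exists y; auto. Qed.
Lemma uimp_max V Y Z : upper le V -> subset (Umul imp V Y) Z -> subset V (Uimp le imp Y Z).
Proof. intros h1 h2 a Ha. exists V; auto. Qed.
Lemma ulimp_max V Y Z : upper le V -> subset (Umul imp Y V) Z -> subset V (Ulimp le imp Y Z).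
Proof. intros h1 h2 a Ha. exists V; auto. Qed.

Lemma mu_upper F X : upper le F -> upper le X -> upper le (mu F X).
Proof. intros h1 h2 a b [x y] h; split; eauto. Qed.

End S.

Theorem proposition3p3
  (A : Type) (le : A -> A -> Prop) (imp limp : A -> A -> A) (one : A)
  (HA : is_integral_quantum_B_algebra le imp limp one)
  (X F : A -> Prop)
  (HX : upper le X) (HF : upper le F)
  (HFf : is_filter le imp F)
  (H1X : X one) (H1F : F one) :
  let W := mu F X in
  let WX := Uimp le imp W X in
  let WlX := Ulimp le imp W X in
  (* (1) *)
  (Umul imp W (mu F WlX) = W /\ W = Umul imp (mu F WX) W) /\
  (* (2) *)
  Uimp le imp (mu F WX) WX = WX /\
  (* (3) *)
  Ulimp le imp (mu F WlX) WlX = WlX /\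
  (* (4) *)
  Umul imp WX (mu F WX) = WX /\
  (* (5) *)
  Umul imp (mu F WlX) WlX = WlX /\
  (* (6) *)
  (mu F WX = Umul imp (mu F WX) (mu F WX) /\
   (mu F WX one -> is_filter le imp (mu F WX))) /\
  (* (7) *)
  (mu F WlX = Umul imp (mu F WlX) (mu F WlX) /\
   (mu F WlX one -> is_filter le imp (mu F WlX))).
Proof.
  intros W WX WlX.
  destruct HFf as [_ [_ HFF]].
  assert (HW : upper le W) by (apply mu_upper; auto).
  assert (HWX : upper le WX) by apply uimp_upper.
  assert (HWlX : upper le WlX) by apply ulimp_upper.
  set (M := mu F WX). set (N := mu F WlX).
  assert (HM : upper le M) by (apply mu_upper; auto).
  assert (HN : upper le N) by (apply mu_upper; auto).
  assert (W1 : W one) by (split; auto).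
  assert (WX1 : WX one).
  { exists (fun a => le one a). repeat split.
    - intros a b h1 h2. eapply (trans' HA); eauto.
    - intros a [y [Hy Hx]]. apply (one_le HA) in Hx; auto.
      destruct (HW y a Hy Hx); auto.
    - apply (refl' HA); auto. }
  assert (WlX1 : WlX one).
  { exists (fun a => le one a). repeat split.
    - intros a b h1 h2. eapply (trans' HA); eauto.
    - intros a [y [Hy Hx]].
      assert (y = one) by (apply (anti' HA); auto; apply (top' HA); auto). subst y.
      rewrite (oneimp HA) in Hx; auto. destruct Hx; auto.
    - apply (refl' HA); auto. }
  assert (M1 : M one) by (split; auto).
  assert (N1 : N one) by (split; auto).
  assert (E1a : subset (Umul imp W N) W).
  { intros a Ha. split.
    - apply HFF. revert Ha. apply mul_mono; intros b [h1 h2]; auto.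
    - apply (ulimp_le (le:=le) (imp:=imp) W X). revert Ha. apply mul_mono; intros b h; [exact h| apply h]. }
  assert (E1b : subset (Umul imp M W) W).
  { intros a Ha. split.
    - apply HFF. revert Ha. apply mul_mono; intros b [h1 h2]; auto.
    - apply (uimp_le (le:=le) (imp:=imp) W X). revert Ha. apply mul_mono; intros b h; [apply h| exact h]. }
  assert (E4 : subset (Umul imp WX M) WX).
  { apply uimp_max. apply (mul_upper HA); auto; apply ulimp_upper.
    intros a Ha. apply (assoc_hard HA) in Ha; auto.
    apply (uimp_le (le:=le) (imp:=imp) W X). revert Ha. apply mul_mono; [intros b h; exact h| exact E1b]. }
  assert (E5 : subset (Umul imp N WlX) WlX).
  { apply ulimp_max. apply (mul_upper HA); auto.
    intros a Ha. apply (assoc_easy HA) in Ha; auto.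
    apply (ulimp_le (le:=le) (imp:=imp) W X). revert Ha. apply mul_mono; [exact E1a| intros b h; exact h]. }
  assert (E6 : subset (Umul imp M M) M).
  { intros a Ha. split.
    - apply HFF. revert Ha. apply mul_mono; intros b [h1 h2]; auto.
    - apply E4. revert Ha. apply mul_mono; intros b h; [apply h| exact h]. }
  assert (E7 : subset (Umul imp N N) N).
  { intros a Ha. split.
    - apply HFF. revert Ha. apply mul_mono; intros b [h1 h2]; auto.
    - apply E5. revert Ha. apply mul_mono; intros b h; [exact h| apply h]. }
  split; [split|split; [|split; [|split; [|split; [|split]]]]].
  - apply pext; intro a; split; [apply E1a| apply (mul_one_r HA); auto].
  - apply pext; intro a; split; [apply (mul_one_l HA); auto| apply E1b].
  - apply pext; intro a; split.
    + intro Ha. apply (uimp_le (le:=le) (imp:=imp) M WX). apply (mul_one_r HA); auto.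
    + apply uimp_max; auto.
  - apply pext; intro a; split.
    + intro Ha. apply (ulimp_le (le:=le) (imp:=imp) N WlX). apply (mul_one_l HA); auto.
    + apply ulimp_max; auto.
  - apply pext; intro a; split; [apply E4| apply (mul_one_r HA); auto].
  - apply pext; intro a; split; [apply E5| apply (mul_one_l HA); auto].
  - split.
    + apply pext; intro a; split; [apply (mul_one_r HA); auto| apply E6].
    + intros _. split; [exists one; auto| split; auto].
  - split.
    + apply pext; intro a; split; [apply (mul_one_r HA); auto| apply E7].
    + intros _. split; [exists one; auto| split; auto].
Qed.
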